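(* Let $p$ be an odd prime. For every integer $0<s<p-1$ we have $b_{1,s}(\alpha)=b_{1,p-1-s}(\alpha)$ in $\mathbb F_p[\alpha]$.
   Context: $\mathbb F_p$ is the field of $p$ elements, $\alpha$ an indeterminate, $\binom{x}{m}=x(x-1)\cdots(x-m+1)/m!$. For integers $0<r,s<p$ (interpreted as elements of $\mathbb F_p$), $b_{r,s}(\alpha)=\sum_{k=0}^{p-1}(-r/s)^k\binom{r\alpha-1}{p-1-k}\binom{s\alpha-1}{k}\in\mathbb F_p[\alpha]$. *)

(* Defs.v *)
From mathcomp Require Import all_boot all_order all_algebra.
Set Implicit Arguments. Unset Strict Implicit. Unset Printing Implicit Defensive.
Import GRing.Theory.
Local Open Scope ring_scope.

(* Generalized binomial coefficient of a polynomial q over a field F: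
   binom(q, m) = q (q-1) ... (q-m+1) / m!.  (Only used with m <= p-1 in
   characteristic p, so m! is invertible.) *)
Definition poly_binom (F : fieldType) (q : {poly F}) (m : nat) : {poly F} :=
  (m`!%:R)^-1 *: \prod_(i < m) (q - (i%:R)%:P).

(* b_{r,s}(alpha) in F_p[alpha], with r, s read in F_p and alpha = 'X. *)
Definition b_poly (p r s : nat) : {poly 'F_p} :=
  \sum_(k < p)
    ((- ((r%:R : 'F_p) / (s%:R : 'F_p))) ^+ k) *:
      (poly_binom ((r%:R : 'F_p) *: 'X - 1) (p.-1 - k) *
       poly_binom ((s%:R : 'F_p) *: 'X - 1) k).

(* Main.v *)
Require Import Defs.
From mathcomp Require Import all_boot all_order all_algebra all_field zify ring.
Set Implicit Arguments. Unset Strict Implicit. Unset Printing Implicit Defensive.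
Import GRing.Theory.
Local Open Scope ring_scope.

Lemma ffact_natr (R : nzRingType) (n m : nat) :
  (n ^_ m)%:R = \prod_(i < m) (n%:R - i%:R) :> R.
Proof.
elim: m => [|m IH]; first by rewrite ffactn0 big_ord0.
rewrite ffactnSr big_ord_recr /= -IH natrM.
case: (leqP m n) => [hmn|hnm]; first by rewrite natrB.
by rewrite ffact_small // !mul0r.
Qed.

Lemma fact_Fp_neq0 (p : nat) (hp : prime p) (m : nat) :
  (m < p)%N -> (m`!%:R : 'F_p) != 0.
Proof.
move=> hm; rewrite -(dvdn_pcharf (pchar_Fp hp)).
elim: m hm => [|m IH] hm; first by rewrite fact0 dvdn1; apply/eqP => e; move: hp; rewrite e.
rewrite factS Euclid_dvdM // negb_or IH ?(ltnW hm) // andbT.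
by rewrite gtnNdvd.
Qed.

Lemma bin_Fp (p : nat) (hp : prime p) (n m : nat) : (m < p)%N ->
  (m`!%:R : 'F_p)^-1 * \prod_(i < m) (n%:R - i%:R) = 'C(n, m)%:R.
Proof.
move=> hm; rewrite -ffact_natr -bin_ffact natrM mulrC mulfK //.
exact: fact_Fp_neq0.
Qed.

Lemma horner_poly_binom (F : fieldType) (q : {poly F}) m c :
  (poly_binom q m).[c] = (m`!%:R)^-1 * \prod_(i < m) (q.[c] - i%:R).
Proof.
rewrite /poly_binom hornerZ horner_prod; congr (_ * _).
by apply: eq_bigr => i _; rewrite hornerD hornerN hornerC.
Qed.

Lemma coef_lin_pow (R : comNzRingType) (x : R) m j :
  ((x *: 'X + 1) ^+ m)`_j = x ^+ j * 'C(m, j)%:R.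
Proof.
rewrite addrC exprDn coef_sum.
under eq_bigr => i _ do rewrite expr1n mul1r exprZn coefMn coefZ coefXn.
case: (leqP j m) => hj.
  rewrite (bigD1 (Ordinal (hj : (j < m.+1)%N) : 'I_m.+1)) //= eqxx mulr1 big1 ?addr0.
    by rewrite mulr_natr.
  by move=> i /negbTE hi; rewrite eq_sym -val_eqE /= in hi; rewrite hi mulr0 mul0rn.
rewrite bin_small // mulr0 big1 // => i _.
have: (i < j)%N by apply: leq_trans (ltn_ord i) _.
by rewrite ltn_neqAle => /andP [/negbTE]; rewrite eq_sym => -> _; rewrite mulr0 mul0rn.
Qed.


Lemma coef_prod (R : comNzRingType) (x : R) n m N :
  ((x *: 'X + 1) ^+ m * ('X + 1) ^+ n)`_N =
  \sum_(k < N.+1) x ^+ k * 'C(m, k)%:R * 'C(n, N - k)%:R.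
Proof.
rewrite coefM; apply: eq_bigr => k _.
by rewrite coef_lin_pow -['X]scale1r coef_lin_pow expr1n mul1r.
Qed.

Lemma expand (R : comNzRingType) (x : R) n m :
  (x *: 'X + 1) ^+ m * ('X + 1) ^+ n =
  \sum_(i < m.+1) (((1 - x) ^+ (m - i) * x ^+ i) *+ 'C(m, i)) *: ('X + 1) ^+ (n + i).
Proof.
have e : x *: 'X + 1 = (1 - x)%:P + x *: ('X + 1) :> {poly R}.
  by rewrite scalerDr alg_polyC polyCB polyC1 [RHS]addrC -addrA (addrC x%:P) subrK.
rewrite e exprDn mulr_suml; apply: eq_bigr => i _.
rewrite mulrnAl -scalerMnl; congr (_ *+ _).
by rewrite -polyC_exp exprZn mul_polyC -!scalerAl scalerA addnC exprD.
Qed.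

Lemma coef_expand (R : comNzRingType) (x : R) n m N :
  ((x *: 'X + 1) ^+ m * ('X + 1) ^+ n)`_N =
  \sum_(i < m.+1) ((1 - x) ^+ (m - i) * x ^+ i) *+ 'C(m, i) * 'C(n + i, N)%:R.
Proof.
rewrite expand coef_sum; apply: eq_bigr => i _.
by rewrite coefZ -['X]scale1r coef_lin_pow expr1n mul1r.
Qed.

Lemma not_dvd_fact (p : nat) (hp : prime p) (m : nat) :
  (m < p)%N -> ~~ (p %| m`!)%N.
Proof.
elim: m => [|m IH] hm; first by rewrite fact0 dvdn1; apply/eqP => e; move: hp; rewrite e.
rewrite factS Euclid_dvdM // negb_or IH ?(ltnW hm) // andbT.
by rewrite gtnNdvd.
Qed.

Lemma binFp (p : nat) (hp : prime p) (k : nat) :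
  (k <= (p.-1).*2)%N -> ('C(k, p.-1)%:R : 'F_p) = (k == p.-1)%:R.
Proof.
move=> hk.
have p0 : (0 < p)%N by apply: prime_gt0.
case: (ltngtP k p.-1) => hkp.
- by rewrite bin_small.
- apply/eqP; rewrite -(dvdn_pcharf (pchar_Fp hp)).
  have hf := bin_fact (ltnW hkp).
  have : (p %| k`!)%N by apply: dvdn_fact; rewrite p0 /=; rewrite -(prednK p0).
  rewrite -hf !Euclid_dvdM // (negbTE (not_dvd_fact hp _)) ?prednK ?ltnSn //=.
  rewrite (negbTE (not_dvd_fact hp _)) ?orbF //.
  move: hk p0; rewrite -addnn; lia.
- by rewrite hkp binn.
Qed.

Lemma sum_ind (R : nzRingType) (G : nat -> R) n m N : (n <= N)%N ->
  \sum_(i < m.+1) G i * ((n + i == N)%N)%:R = if (N - n <= m)%N then G (N - n)%N else 0.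
Proof.
move=> hnN.
have eq (i : nat) : ((n + i == N) = (i == N - n))%N by apply/eqP/eqP; lia.
under eq_bigr => i _ do rewrite eq.
case: ifP => hj.
  rewrite (bigD1 (Ordinal (hj : (N - n < m.+1)%N) : 'I_m.+1)) //= eqxx mulr1 big1 ?addr0 //.
  by move=> i /negbTE hi; rewrite -val_eqE /= in hi; rewrite hi mulr0.
rewrite big1 // => i _.
have: (nat_of_ord i != N - n)%N by apply/eqP => e; move: (ltn_ord i); rewrite e ltnS hj.
by move/negbTE => ->; rewrite mulr0.
Qed.

Definition E (p n m : nat) (x : 'F_p) : 'F_p :=
  if (p.-1 - n <= m)%N then ((1 - x) ^+ (m - (p.-1 - n)) * x ^+ (p.-1 - n)) *+ 'C(m, p.-1 - n)
  else 0.
Arguments E : clear implicits.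

Lemma coef_E (p : nat) (hp : prime p) n m (x : 'F_p) : (n < p)%N -> (m < p)%N ->
  ((x *: 'X + 1) ^+ m * ('X + 1) ^+ n)`_(p.-1) = E p n m x.
Proof.
move=> hn hm; have p0 : (0 < p)%N by apply: prime_gt0.
rewrite coef_expand /E -(@sum_ind _ (fun i => ((1 - x) ^+ (m - i) * x ^+ i) *+ 'C(m, i)) n m p.-1); last by lia.
apply: eq_bigr => i _; rewrite binFp //.
by move: (ltn_ord i) hn hm; rewrite -addnn; lia.
Qed.

Lemma Fp_rep (p : nat) (hp : prime p) (z : 'F_p) : ((nat_of_ord z)%:R : 'F_p) = z /\ (z < p)%N.
Proof.
split; first exact: natr_Zp.
by rewrite -[X in (_ < X)%N](Fp_cast hp); exact: ltn_ord.
Qed.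

Lemma b_eval (p : nat) (hp : prime p) (s : nat) (c : 'F_p) :
  (b_poly p 1 s).[c] =
  E p (nat_of_ord (c - 1)) (nat_of_ord (s%:R * c - 1)) (- (1%:R / s%:R)).
Proof.
have p0 : (0 < p)%N by apply: prime_gt0.
have [hn1 hn2] := Fp_rep hp (c - 1).
have [hm1 hm2] := Fp_rep hp (s%:R * c - 1).
rewrite -coef_E // coef_prod prednK // /b_poly horner_sum.
apply: eq_bigr => k _.
rewrite hornerZ hornerM !horner_poly_binom.
have -> : (1%:R *: 'X - 1 : {poly 'F_p}).[c] = (nat_of_ord (c - 1))%:R.
  by rewrite hn1 !hornerE.
have -> : (s%:R *: 'X - 1 : {poly 'F_p}).[c] = (nat_of_ord (s%:R * c - 1))%:R.
  by rewrite hm1 !hornerE.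
rewrite !bin_Fp //; last by lia.
ring.
Qed.

Lemma Fp_fermat (p : nat) (hp : prime p) (y : 'F_p) : y != 0 -> y ^+ p.-1 = 1.
Proof.
move=> y0; have p0 : (0 < p)%N by apply: prime_gt0.
have h : y ^+ p = y by rewrite -[X in y ^+ X = _](card_Fp hp) expf_card.
have h2 : y ^+ (p.-1).+1 = y by rewrite (prednK p0).
rewrite exprS in h2.
by apply: (mulIf y0); rewrite mul1r mulrC.
Qed.

Lemma natFp_neq0 (p : nat) (hp : prime p) (k : nat) : (0 < k < p)%N -> (k%:R : 'F_p) != 0.
Proof.
by move=> /andP [k0 kp]; rewrite -(dvdn_pcharf (pchar_Fp hp)) gtnNdvd.
Qed.

Lemma phi_const (p : nat) (hp : prime p) (k : nat) : (k <= p.-2)%N ->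
  (k`!%:R * (p.-2 - k)`!%:R * (-1) ^+ k * k.+1%:R : 'F_p) = (p.-2)`!%:R.
Proof.
have p0 : (0 < p)%N by apply: prime_gt0.
have p1 : (1 < p)%N by apply: prime_gt1.
elim: k => [|k IH] hk; first by rewrite fact0 subn0 expr0 !mulr1 mul1r.
rewrite -IH ?(ltnW hk) //.
have e1 : (p.-2 - k)%N = (p.-2 - k.+1).+1 by lia.
have e2 : (((p.-2 - k.+1).+1)%:R : 'F_p) = - (k.+2)%:R.
  apply/eqP; rewrite -addr_eq0 -natrD.
  have -> : ((p.-2 - k.+1).+1 + k.+2)%N = p by lia.
  by rewrite pchar_Fp_0.
rewrite e1 (factS (p.-2 - k.+1)) natrM e2 factS natrM exprS.
ring.
Qed.

Lemma G_alg (K : fieldType) (Fm Fm' Fe Bm Cm C s : K) :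
  Fm' != 0 -> Fe != 0 -> Bm != 0 -> Cm != 0 -> C != 0 -> s != 0 ->
  Fm / Bm * ((- C * (s * Cm))^-1 / Fe) = - (Fm * Fm') / (Fm' * Fe * s * C * Bm * Cm).
Proof. by move=> h1 h2 h3 h4 h5 h6; field; rewrite oppr_eq0 h1 h2 h3 h4 h5 h6. Qed.

Lemma G_eq (p : nat) (hp : prime p) (m m' : nat) : (m <= p.-2)%N -> (m' <= p.-2)%N ->
  (m`!%:R / (m.+1%:R : 'F_p) ^+ m) * ((- (m'.+1%:R : 'F_p)) ^+ (p.-2 - m') / (p.-2 - m')`!%:R)
  = - (m`!%:R * m'`!%:R) / ((p.-2)`!%:R * (m.+1%:R : 'F_p) ^+ m * (m'.+1%:R : 'F_p) ^+ m').
Proof.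
move=> hm hm'.
have p1 : (1 < p)%N by apply: prime_gt1.
have C0 : (m'.+1%:R : 'F_p) != 0 by apply: natFp_neq0 => //; lia.
have B0 : (m.+1%:R : 'F_p) != 0 by apply: natFp_neq0 => //; lia.
have NC0 : (- (m'.+1%:R : 'F_p)) != 0 by rewrite oppr_eq0.
have ferm : (- (m'.+1%:R : 'F_p)) ^+ (p.-2 - m') * (- (m'.+1%:R : 'F_p)) ^+ m'.+1 = 1.
  rewrite -exprD; have -> : (p.-2 - m' + m'.+1 = p.-1)%N by lia.
  exact: Fp_fermat.
have Y0 : (- (m'.+1%:R : 'F_p)) ^+ m'.+1 != 0 by rewrite expf_eq0 negb_and NC0 orbT.
have e1 : (- (m'.+1%:R : 'F_p)) ^+ (p.-2 - m') = ((- (m'.+1%:R : 'F_p)) ^+ m'.+1)^-1.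
  by rewrite -[LHS]mulr1 -[X in _ * X](divff Y0) mulrA ferm mul1r.
rewrite e1 -(phi_const hp hm') exprS (exprNn (m'.+1%:R : 'F_p) m').
have Fe0 : ((p.-2 - m')`!%:R : 'F_p) != 0 by apply: fact_Fp_neq0 => //; lia.
have Fm0 : (m'`!%:R : 'F_p) != 0 by apply: fact_Fp_neq0 => //; lia.
have s0 : ((-1) ^+ m' : 'F_p) != 0 by rewrite signr_eq0.
have Bm0 : ((m.+1%:R : 'F_p) ^+ m) != 0 by rewrite expf_eq0 negb_and B0 orbT.
have Cm0 : ((m'.+1%:R : 'F_p) ^+ m') != 0 by rewrite expf_eq0 negb_and C0 orbT.
exact: G_alg.
Qed.

Lemma L_alg (K : fieldType) (Ce Be Aj Bj Fm Fj Fe Bm : K) :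
  Be * Bj = Bm -> Be != 0 -> Bj != 0 -> Fj != 0 -> Fe != 0 ->
  Ce / Be * (Aj / Bj) * (Fm / (Fj * Fe)) = Aj / Fj * (Fm / Bm * (Ce / Fe)).
Proof. by move=> <- h1 h2 h3 h4; field; rewrite h1 h2 h3 h4. Qed.

Lemma E_sym (p : nat) (hp : prime p) n m m' (x x' : 'F_p) :
  (n < p.-1)%N -> (m < p.-1)%N -> (m' < p.-1)%N -> (p %| n + m + m' + 3)%N ->
  x = - (n.+1%:R) / (m.+1%:R) -> x' = - (n.+1%:R) / (m'.+1%:R) ->
  E p n m x = E p n m' x'.
Proof.
move=> hn hm hm' /dvdnP [k hk] hx hx'.
have p1 : (1 < p)%N by apply: prime_gt1.
have k3 : (k < 3)%N.
  rewrite ltnNge; apply/negP => h3; have := leq_mul h3 (leqnn p); lia.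
case: k hk k3 => [|[|[|k]]] hk k3 //; first by lia.
  rewrite /E !ifF //; apply/negbTE; rewrite -ltnNge; lia.
pose j := (p.-1 - n)%N.
have hjm : (j <= m)%N by lia.
have hjm' : (j <= m')%N by lia.
rewrite /E !ifT //.
have em : (m - j = p.-2 - m')%N by lia.
have em' : (m' - j = p.-2 - m)%N by lia.
have A0 : (n.+1%:R : 'F_p) != 0 by apply: natFp_neq0 => //; lia.
have B0 : (m.+1%:R : 'F_p) != 0 by apply: natFp_neq0 => //; lia.
have C0 : (m'.+1%:R : 'F_p) != 0 by apply: natFp_neq0 => //; lia.
have hsum : (m'.+1%:R : 'F_p) = - (n.+1%:R + m.+1%:R).
  apply/eqP; rewrite -addr_eq0 -!natrD.
  have -> : (m'.+1 + (n.+1 + m.+1) = 2 * p)%N by lia.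
  by rewrite natrM pchar_Fp_0 // mulr0.
have h1x : 1 - x = - (m'.+1%:R) / (m.+1%:R).
  by rewrite hx hsum; field; rewrite addrC natr1.
have h1x' : 1 - x' = - (m.+1%:R) / (m'.+1%:R).
  have hsum' : (m.+1%:R : 'F_p) = - (n.+1%:R + m'.+1%:R) by rewrite hsum; ring.
  by rewrite hx' hsum'; field; rewrite addrC natr1.
have hC (u : nat) : (j <= u)%N -> (u < p)%N ->
    ('C(u, j)%:R : 'F_p) = u`!%:R / (j`!%:R * (u - j)`!%:R).
  move=> hju hup.
  rewrite -(bin_fact hju) !natrM mulfK // mulf_neq0 //; apply: fact_Fp_neq0 => //; lia.
rewrite -[_ *+ 'C(m, _)]mulr_natr -[_ *+ 'C(m', _)]mulr_natr (hC m) ?(hC m'); try lia.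
rewrite -/j.
rewrite h1x h1x' hx hx' em em' !expr_div_n.
have Fj0 : (j`!%:R : 'F_p) != 0 by apply: fact_Fp_neq0 => //; lia.
rewrite (@L_alg _ _ _ _ _ _ _ _ ((m.+1%:R : 'F_p) ^+ m)); last first.
- by apply: fact_Fp_neq0 => //; lia.
- exact: Fj0.
- by rewrite expf_eq0 negb_and B0 orbT.
- by rewrite expf_eq0 negb_and B0 orbT.
- by rewrite -exprD; congr (_ ^+ _); lia.
rewrite (@L_alg _ _ _ _ _ _ _ _ ((m'.+1%:R : 'F_p) ^+ m')); last first.
- by apply: fact_Fp_neq0 => //; lia.
- exact: Fj0.
- by rewrite expf_eq0 negb_and C0 orbT.
- by rewrite expf_eq0 negb_and C0 orbT.
- by rewrite -exprD; congr (_ ^+ _); lia.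
rewrite !G_eq //; try lia.
congr (_ * _); congr (_ / _); first by rewrite mulrC.
by rewrite -!mulrA; congr (_ * _); rewrite mulrC.
Qed.

Lemma natr_pm1 (p : nat) (hp : prime p) : ((p.-1)%:R : 'F_p) = -1.
Proof.
have p0 : (0 < p)%N by apply: prime_gt0.
by apply/eqP; rewrite -addr_eq0 natr1 prednK // pchar_Fp_0.
Qed.

Lemma rep_m1 (p : nat) (hp : prime p) (k : nat) :
  (k < p)%N -> (k%:R : 'F_p) = -1 -> k = p.-1.
Proof.
move=> hk e.
have : (p %| k.+1)%N by rewrite (dvdn_pcharf (pchar_Fp hp)) -natr1 e addNr.
move/(dvdn_leq (ltn0Sn k)) => h; lia.
Qed.

Lemma size_lin (p : nat) (a : 'F_p) : (size ((a *: 'X - 1)%R : {poly 'F_p}) <= 2)%N.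
Proof.
apply: leq_trans (size_add _ _) _; rewrite size_opp size_poly1 geq_max /=.
rewrite andbT; apply: leq_trans (size_scale_leq _ _) _; by rewrite size_polyX.
Qed.

Lemma size_pb (p : nat) (q : {poly 'F_p}) m : (size q <= 2)%N ->
  (size (poly_binom q m) <= m.+1)%N.
Proof.
move=> hq; apply: leq_trans (size_scale_leq _ _) _.
elim: m => [|m IH]; first by rewrite big_ord0 size_poly1.
rewrite big_ord_recr /=; apply: leq_trans (size_mul_leq _ _) _.
have h2 : (size (q - m%:R%:P)%R <= 2)%N.
  apply: leq_trans (size_add _ _) _; rewrite size_opp geq_max hq /=.
  by apply: leq_trans (size_polyC_leq1 _) _.
move: IH h2; move: (size (\prod_(i < m) (q - (i%:R)%:P))%R) (size (q - (m%:R)%:P)%R) => a b; lia.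
Qed.

Lemma size_b (p : nat) (hp : prime p) s : (size (b_poly p 1 s) <= p)%N.
Proof.
have p0 : (0 < p)%N by apply: prime_gt0.
rewrite /b_poly; apply: (big_ind (fun q : {poly 'F_p} => (size q <= p)%N)).
- by rewrite size_poly0.
- by move=> u v hu hv; apply: leq_trans (size_add _ _) _; rewrite geq_max hu hv.
move=> k _; apply: leq_trans (size_scale_leq _ _) _.
apply: leq_trans (size_mul_leq _ _) _.
have h1 := size_pb (p.-1 - k) (@size_lin p 1%:R).
have h2 := size_pb k (@size_lin p s%:R).
move: h1 h2 (ltn_ord k); move: (size (poly_binom _ (p.-1 - k))) (size (poly_binom _ k)) => a b; lia.
Qed.

Lemma one_minus_ne0 (p : nat) (hp : prime p) (s : nat) : (0 < s)%N -> (s.+1 < p)%N ->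
  1 - (- ((1%:R : 'F_p) / s%:R)) != 0.
Proof.
move=> s0 sp.
have S0 : (s%:R : 'F_p) != 0 by apply: natFp_neq0 => //; lia.
have S1 : (s.+1%:R : 'F_p) != 0 by apply: natFp_neq0 => //; lia.
have -> : 1 - (- ((1%:R : 'F_p) / s%:R)) = s.+1%:R / s%:R.
  by rewrite -natr1; field.
by rewrite mulf_neq0 ?invr_eq0.
Qed.

Lemma eval_eq (p : nat) (hp : prime p) (s : nat) (hs0 : (0 < s)%N) (hs1 : (s < p.-1)%N)
  (c : 'F_p) : (b_poly p 1 s).[c] = (b_poly p 1 (p.-1 - s)).[c].
Proof.
have p1 : (1 < p)%N by apply: prime_gt1.
rewrite !b_eval //.
set t := (p.-1 - s)%N.
have [hn1 hn2] := Fp_rep hp (c - 1).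
have [hm1 hm2] := Fp_rep hp (s%:R * c - 1).
have [hl1 hl2] := Fp_rep hp (t%:R * c - 1).
move: (nat_of_ord (c - 1)) hn1 hn2 => n hn1 hn2.
move: (nat_of_ord (s%:R * c - 1)) hm1 hm2 => m hm1 hm2.
move: (nat_of_ord (t%:R * c - 1)) hl1 hl2 => l hl1 hl2.
have S0 : (s%:R : 'F_p) != 0 by apply: natFp_neq0 => //; lia.
have T0 : (t%:R : 'F_p) != 0 by apply: natFp_neq0 => //; lia.
have hst : (1 + s%:R + t%:R : 'F_p) = 0.
  have e : (1 + s + t = p)%N by rewrite /t; lia.
  by have := congr1 (fun k => (k%:R : 'F_p)) e; rewrite !natrD mulr1n pchar_Fp_0 // => <-.
have [c0|c0] := eqVneq c 0.
  rewrite c0 in hn1 hm1 hl1.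
  rewrite mulr0 sub0r in hm1; rewrite mulr0 sub0r in hl1; rewrite sub0r in hn1.
  rewrite (rep_m1 hp hn2 hn1) (rep_m1 hp hm2 hm1) (rep_m1 hp hl2 hl1).
  rewrite /E subnn !leq0n !subn0 !expr0 !mulr1 !bin0 !mulr1n.
  rewrite !Fp_fermat //; apply: one_minus_ne0 => //; lia.
have ne (k : nat) (u : 'F_p) : (k < p)%N -> k%:R = u -> u != -1 -> (k < p.-1)%N.
  move=> hk hu hu1; rewrite ltn_neqAle -ltnS prednK ?hk ?andbT; last by lia.
  by apply/eqP => e; move: hu; rewrite e natr_pm1 // => e'; rewrite e' eqxx in hu1.
have n1 : (n.+1%:R : 'F_p) = c by rewrite -natr1 hn1 subrK.
have m1 : (m.+1%:R : 'F_p) = s%:R * c by rewrite -natr1 hm1 subrK.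
have l1 : (l.+1%:R : 'F_p) = t%:R * c by rewrite -natr1 hl1 subrK.
apply: E_sym => //.
- apply: (ne _ _ hn2 hn1); rewrite subr_eq addNr; exact: c0.
- apply: (ne _ _ hm2 hm1); rewrite subr_eq addNr mulf_neq0 //.
- apply: (ne _ _ hl2 hl1); rewrite subr_eq addNr mulf_neq0 //.
- rewrite (dvdn_pcharf (pchar_Fp hp)).
  apply/eqP; rewrite !natrD hn1 hm1 hl1.
  have e : (c - 1 + (s%:R * c - 1) + (t%:R * c - 1) + 3%:R) = (1 + s%:R + t%:R) * c by ring.
  by rewrite e hst mul0r.
- by rewrite n1 m1; field; rewrite S0 c0.
- by rewrite n1 l1; field; rewrite T0 c0.
Qed.

Local Close Scope ring_scope.

Theorem corollary14 (p : nat) (hp : prime p) (hodd : odd p) (s : nat)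
  (hs0 : (0 < s)%N) (hs1 : (s < p.-1)%N) :
  b_poly p 1 s = b_poly p 1 (p.-1 - s).
Proof.
apply/eqP; rewrite -GRing.subr_eq0; apply/negPn/negP => hD.
have hr : all (root (b_poly p 1 s - b_poly p 1 (p.-1 - s))) (enum 'F_p).
  apply/allP => c _; by rewrite /root hornerD hornerN eval_eq // subrr.
have := max_poly_roots hD hr (enum_uniq _).
rewrite -cardE card_Fp // ltnNge; move/negP; apply.
apply: leq_trans (size_add _ _) _; rewrite size_opp geq_max !size_b //.
Qed.
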